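(* Let $G$ and $H$ be locally compact abelian groups with $H$ torsion-free, and let $f:G\to H$ be a continuous homomorphism. Then $f(G_{op})\subseteq H_{op}$.
   Context: A subgroup $H$ of an abelian group $G$ is pure if $nH=H\cap nG$ for every positive integer $n$. For an LCA group $G$, $G_{op}$ denotes the intersection of all open pure subgroups of $G$. *)

(* Defs.v *)
From HB Require Import structures.
From mathcomp Require Import all_boot all_order all_algebra.
From mathcomp Require Import all_classical all_reals all_analysis.
Set Implicit Arguments. Unset Strict Implicit. Unset Printing Implicit Defensive.
Import Order.TTheory GRing.Theory Num.Theory.
Local Open Scope classical_set_scope.
Local Open Scope ring_scope.

Definition LCA (G : topologicalZmodType) : Prop :=
  hausdorff_space G /\ locally_compact [set: G].

Definition is_subgroup (G : zmodType) (S : set G) : Prop :=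
  S 0 /\ (forall x y, S x -> S y -> S (x - y)).

Definition nmul (G : zmodType) (n : nat) (S : set G) : set G :=
  [set x *+ n | x in S].

Definition pure_subgroup (G : zmodType) (S : set G) : Prop :=
  is_subgroup S /\ forall n : nat, (0 < n)%N -> nmul n S = S `&` nmul n [set: G].

Definition open_pure_subgroup (G : topologicalZmodType) (S : set G) : Prop :=
  open S /\ pure_subgroup S.

Definition G_op (G : topologicalZmodType) : set G :=
  \bigcap_(S in [set S : set G | open_pure_subgroup S]) S.

Definition torsion_free (G : zmodType) : Prop :=
  forall (n : nat) (x : G), (0 < n)%N -> x *+ n = 0 -> x = 0.
Arguments G_op : clear implicits.

(* Main.v *)
Require Import Defs.
From HB Require Import structures.
From mathcomp Require Import all_boot all_order all_algebra.
From mathcomp Require Import all_classical all_reals all_analysis.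
Import Order.TTheory GRing.Theory Num.Theory.
Local Open Scope classical_set_scope.
Local Open Scope ring_scope.

Theorem lemma8 (G H : topologicalZmodType) (f : G -> H) :
  LCA G -> LCA H -> torsion_free H ->
  (forall x y : G, f (x + y) = f x + f y) -> continuous f ->
  f @` G_op G `<=` G_op H.
Proof.
move=> _ _ tf fD fc _ [x Gx <-] S [oS [[S0 SB] pS]].
have f0 : f 0 = 0.
  by apply: (@addrI _ (f 0)); rewrite -fD !addr0.
have fN : forall y, f (- y) = - f y.
  by move=> y; apply/eqP; rewrite -subr_eq0 opprK -fD addNr f0.
have fB : forall y z, f (y - z) = f y - f z by move=> y z; rewrite fD fN.
have fMn : forall y n, f (y *+ n) = f y *+ n.
  by move=> y; elim=> [|n IH]; rewrite ?mulr0n // !mulrS fD IH.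
apply: (Gx (f @^-1` S)); split.
  by apply: open_comp => // y _; exact: fc.
split; first split.
- by rewrite /= f0.
- by move=> y z Sy Sz; rewrite /= fB; exact: SB.
move=> n n0; apply/seteqP; split.
  move=> _ [y Sy <-]; split; last by exists y.
  rewrite /= fMn; elim: n {n0} => [|k IH]; first by rewrite mulr0n.
  have SN : S (- f y) by rewrite -[- f y]add0r; exact: (SB _ _ S0 Sy).
  by move: (SB _ _ IH SN); rewrite opprK mulrS addrC.
move=> g [Sg [y _ yg]].
have : (S `&` nmul n [set: H]) (f g).
  by split => //; exists (f y) => //; rewrite -fMn yg.
rewrite -pS // => -[s Ss sfg].
have e : f y = s.
  apply/eqP; rewrite -subr_eq0; apply/eqP; apply: (tf n) => //.
  by rewrite mulrnBl -fMn yg sfg subrr.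
by exists y => //; rewrite /= e.
Qed.
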